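(* Let $\phi_*\in(0,\pi/2)$, $R\ge33.2r$, and consider the billiard map on $Q(\phi_*,R)$. For $x\in M_r$ with $n_1\ge2$, letting $\tau_0=|p(x_0)p(x_1)|$ and $\tau_1=|p(F^{n_1}x_1)p(x_2)|$, one has $$\tau_0<\tfrac23 d_0+\tfrac23 d_1\quad\text{and}\quad\tau_1<\tfrac23 d_1+\tfrac23 d_2.$$
   Context: Setting: $r=1$, $Q(\phi_*,R)=D(O_r,r)\cap D(O_R,R)$ with $|O_rO_R|=\sqrt{R^2-r^2\sin^2\phi_*}-r\cos\phi_*$; boundary arcs $\Gamma_r\subset\partial D(O_r,r)$ (position angles $[\phi_*,2\pi-\phi_*]$) and $\Gamma_R\subset\partial D(O_R,R)$. Phase space $M=M_r\sqcup M_R$, coordinates $(\phi,\theta)$ with $\theta\in(0,\pi)$ the angle from the positive tangent direction; $p(x)$ the base point; $F$ the billiard map. $M_r^{out}=M_r\cap F^{-1}(M_R)$, $M_R^{out}=M_R\cap F^{-1}(M_r)$. For $x\in M_r$: $x_0=F^{n_0}x$ with $n_0=\inf\{n\ge0:F^nx\in M_r^{out}\}$, $x_1=Fx_0$, $n_1=\inf\{n\ge0:F^nx_1\in M_R^{out}\}$, $x_2=F^{n_1+1}x_1$; $d_0=r\sin\theta(x_0)$, $d_1=R\sin\theta(x_1)$, $d_2=r\sin\theta(x_2)$. *)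

(* Defs.v *)
From Stdlib Require Import Reals Lra.
Open Scope R_scope.

(* Billiard in the lens Q(phi_star, R) = D(O_r, r) /\ D(O_R, R), with r = 1.
   Coordinates: O_r = (0,0), O_R = (-|O_r O_R|, 0), so that the corners are
   O_r + r(cos phi_star, +- sin phi_star) and Gamma_r has position angles
   [phi_star, 2pi - phi_star]. *)

Definition rr : R := 1.

Definition dOO (phis Rb : R) : R :=
  sqrt (Rb ^ 2 - rr ^ 2 * (sin phis) ^ 2) - rr * cos phis.

Inductive side := Sr | SR.

Definition other (s : side) : side := match s with Sr => SR | SR => Sr end.

Definition center (phis Rb : R) (s : side) : R * R :=
  match s with Sr => (0, 0) | SR => (- dOO phis Rb, 0) end.

Definition radius (Rb : R) (s : side) : R :=
  match s with Sr => rr | SR => Rb end.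

(* A phase point: which arc (M_r or M_R), position angle phi (w.r.t. the
   centre of that arc's circle), and theta in (0,pi), the angle from the
   positive (counterclockwise) tangent direction. *)
Record state := mkState { sd : side; phi : R; theta : R }.

Definition edist (p q : R * R) : R :=
  sqrt ((fst p - fst q) ^ 2 + (snd p - snd q) ^ 2).

Definition base (phis Rb : R) (x : state) : R * R :=
  (fst (center phis Rb (sd x)) + radius Rb (sd x) * cos (phi x),
   snd (center phis Rb (sd x)) + radius Rb (sd x) * sin (phi x)).

(* outgoing unit direction: cos theta * T + sin theta * N_in, with
   T = (-sin phi, cos phi) the positive tangent, N_in = -(cos phi, sin phi). *)
Definition dir (x : state) : R * R :=
  (cos (theta x) * (- sin (phi x)) + sin (theta x) * (- cos (phi x)),
   cos (theta x) * cos (phi x) + sin (theta x) * (- sin (phi x))).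

(* base point lies on the closed arc Gamma_{sd x} (possibly a corner) *)
Definition on_arc_closed (phis Rb : R) (x : state) : Prop :=
  edist (base phis Rb x) (center phis Rb (other (sd x))) <= radius Rb (other (sd x)).

Definition on_arc_open (phis Rb : R) (x : state) : Prop :=
  edist (base phis Rb x) (center phis Rb (other (sd x))) < radius Rb (other (sd x)).

Definition reflect_at (y : state) (v : R * R) : R * R :=
  let n := (cos (phi y), sin (phi y)) in
  let dt := fst v * fst n + snd v * snd n in
  (fst v - 2 * dt * fst n, snd v - 2 * dt * snd n).

(* Fstep x y  <->  y = F x  (billiard map; defined when the next collision
   is not at a corner).  Since Q is strictly convex, the point of the
   forward ray on the boundary with t > 0 is unique, namely the next
   collision point. *)
Definition Fstep (phis Rb : R) (x y : state) : Prop :=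
  0 < theta x < PI /\ 0 < theta y < PI /\
  on_arc_closed phis Rb x /\ on_arc_open phis Rb y /\
  (exists t : R, 0 < t /\
     base phis Rb y = (fst (base phis Rb x) + t * fst (dir x),
                       snd (base phis Rb x) + t * snd (dir x))) /\
  dir y = reflect_at y (dir x).

Definition in_Mr_out (xs : nat -> state) (k : nat) : Prop :=
  sd (xs k) = Sr /\ sd (xs (S k)) = SR.

Definition in_MR_out (xs : nat -> state) (k : nat) : Prop :=
  sd (xs k) = SR /\ sd (xs (S k)) = Sr.

(* Main.v *)
Require Import Defs.
From Stdlib Require Import Reals Lra Lia.
Open Scope R_scope.
Module Core.

Lemma cos_le_a (a y : R) : 0 <= a -> a <= y -> y <= PI -> cos y <= cos a.
Proof.
  intros H0 H1 H2. destruct (Rle_lt_or_eq_dec _ _ H1) as [H|H].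
  - left. apply cos_decreasing_1; lra.
  - subst; lra.
Qed.

Lemma cos_gt_imp (a x : R) : 0 <= a -> a <= PI -> -PI <= x <= PI -> cos a < cos x -> -a < x < a.
Proof.
  intros Ha Hb Hx Hc. split.
  - destruct (Rlt_or_le (-a) x) as [h|h]; auto.
    assert (cos (-x) <= cos a) by (apply cos_le_a; lra). rewrite cos_neg in H. lra.
  - destruct (Rlt_or_le x a) as [h|h]; auto.
    assert (cos x <= cos a) by (apply cos_le_a; lra). lra.
Qed.

Lemma cos_lt_from (a x : R) : a <= PI -> -a < x < a -> cos a < cos x.
Proof.
  intros Ha Hx. destruct (Rle_or_lt 0 x) as [h|h].
  - apply cos_decreasing_1; lra.
  - rewrite <- (cos_neg x). apply cos_decreasing_1; lra.
Qed.

Lemma cos_2pi_shift (z : R) : cos (z + 2*PI) = cos z.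
Proof. rewrite cos_plus, cos_2PI, sin_2PI. ring. Qed.

Lemma core1 (a psi th D R : R) :
  0 < a -> a < PI/6 -> 0 < th < a -> -(PI/2) <= psi <= PI/2 ->
  cos a < cos psi -> cos a < cos (psi + 4*th) -> cos (psi - 2*th) <= cos a ->
  0 < R -> R <= 2*D*cos a ->
  0 < sin (th - psi) /\ R * sin th < D * sin (th - psi).
Proof.
  intros Ha Ha6 Hth Hpsi H1 H3 H4 HR HD.
  assert (HPI := PI_RGT_0).
  assert (Hp : -a < psi < a) by (apply cos_gt_imp; lra).
  assert (H3' : -a < psi + 4*th < a) by (apply cos_gt_imp; lra).
  assert (H4' : psi - 2*th <= -a).
  { destruct (Rle_or_lt (psi - 2*th) (-a)) as [h|h]; auto.
    assert (cos a < cos (psi - 2*th)) by (apply cos_lt_from; lra). lra. }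
  assert (Hca : 0 < cos a) by (apply cos_gt_0; lra).
  assert (HDp : 0 < D) by nra.
  assert (Hs2 : sin (2*th) < sin (th - psi)) by (apply sin_increasing_1; lra).
  rewrite sin_2a in Hs2.
  assert (Hst : 0 < sin th) by (apply sin_gt_0; lra).
  assert (Hct : cos a < cos th) by (apply cos_decreasing_1; lra).
  split.
  - assert (0 < cos th) by lra.
    assert (0 < sin th * cos th) by (apply Rmult_lt_0_compat; lra). lra.
  - assert (R * sin th <= 2*D*cos a * sin th) by (apply Rmult_le_compat_r; lra).
    assert (2*D*cos a * sin th < 2*D*cos th*sin th).
    { assert (0 < 2*D*sin th) by (apply Rmult_lt_0_compat; lra). nra. }
    assert (2 * sin th * cos th * D < sin (th - psi) * D) by (apply Rmult_lt_compat_r; lra).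
    lra.
Qed.

Lemma core0 (a psi th D R : R) :
  0 < a -> a < PI/6 -> 0 < th < PI -> -(PI/2) <= psi <= PI/2 ->
  cos a < cos psi -> cos a < cos (psi + 2*th) -> cos a < cos (psi + 4*th) ->
  cos (psi - 2*th) <= cos a ->
  0 < R -> R <= 2*D*cos a ->
  0 < sin (th - psi) /\ R * sin th < D * sin (th - psi).
Proof.
  intros Ha Ha6 Hth Hpsi H1 H2 H3 H4 HR HD.
  assert (HPI := PI_RGT_0).
  assert (Hp : -a < psi < a) by (apply cos_gt_imp; lra).
  assert (Hc : th < a \/ PI - a < th).
  { destruct (Rlt_or_le (psi + 2*th) a) as [h|h]; [left; lra|].
    destruct (Rle_or_lt (psi + 2*th) PI) as [h'|h'].
    - assert (cos (psi + 2*th) <= cos a) by (apply cos_le_a; lra). lra.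
    - destruct (Rlt_or_le (2*PI - a) (psi + 2*th)) as [h''|h'']; [right; lra|].
      assert (cos (-(psi + 2*th) + 2*PI) <= cos a) by (apply cos_le_a; lra).
      rewrite cos_2pi_shift, cos_neg in H. lra. }
  destruct Hc as [Hc|Hc].
  - apply (core1 a psi th D R); lra.
  - assert (Hk := core1 a (-psi) (PI - th) D R Ha Ha6 ltac:(lra) ltac:(lra)).
    rewrite cos_neg in Hk.
    replace (- psi + 4 * (PI - th)) with (-(psi + 4*th) + 2*PI + 2*PI) in Hk by ring.
    replace (- psi - 2 * (PI - th)) with (-(psi - 2*th + 2*PI)) in Hk by ring.
    rewrite !cos_2pi_shift, !cos_neg, cos_2pi_shift in Hk.
    replace (PI - th - - psi) with (PI - (th - psi)) in Hk by ring.
    rewrite !sin_PI_x in Hk. apply Hk; lra.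
Qed.

Lemma core (a psi th D R : R) :
  0 < a -> a < PI/6 -> 0 < th < PI ->
  cos a < cos psi -> cos a < cos (psi + 2*th) -> cos a < cos (psi + 4*th) ->
  cos (psi - 2*th) <= cos a ->
  0 < R -> R <= 2*D*cos a ->
  0 < sin (th - psi) /\ R * sin th < D * sin (th - psi).
Proof.
  intros Ha Ha6 Hth H1 H2 H3 H4 HR HD.
  assert (HPI := PI_RGT_0).
  assert (Hca : 0 < cos a) by (apply cos_gt_0; lra).
  set (p0 := asin (sin psi)).
  assert (Hb : -1 <= sin psi <= 1) by (apply SIN_bound).
  assert (Hs0 : sin p0 = sin psi) by (apply sin_asin; auto).
  assert (Hc0 : cos p0 = cos psi).
  { unfold p0. rewrite cos_asin by auto.
    assert (Hq := sin2_cos2 psi). rewrite <- (sqrt_Rsqr (cos psi)) by lra.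
    f_equal. unfold Rsqr in *. lra. }
  assert (E : forall x, cos (p0 + x) = cos (psi + x)).
  { intro x. rewrite !cos_plus, Hc0, Hs0. ring. }
  assert (E' : forall x, cos (p0 - x) = cos (psi - x)).
  { intro x. rewrite !cos_minus, Hc0, Hs0. ring. }
  assert (E2 : forall x, sin (x - p0) = sin (x - psi)).
  { intro x. rewrite !sin_minus, Hc0, Hs0. ring. }
  rewrite <- E2. apply (core0 a p0 th D R); try rewrite ?E, ?E', ?Hc0; auto.
  apply asin_bound.
Qed.
End Core.
Import Core.

Lemma unit_cs f : cos f ^ 2 + sin f ^ 2 = 1.
Proof. rewrite <- (sin2_cos2 f). unfold Rsqr. ring. Qed.

Lemma sqrt_lt1 Q : sqrt Q < 1 -> Q < 1.
Proof.
  intros H. destruct (Rlt_or_le Q 1) as [h|h]; auto.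
  apply sqrt_le_1_alt in h. rewrite sqrt_1 in h. lra.
Qed.

Lemma sqrt_leR Q Rb : 0 < Rb -> sqrt Q <= Rb -> Q <= Rb^2.
Proof.
  intros HR H. destruct (Rle_or_lt Q (Rb^2)) as [h|h]; auto.
  assert (sqrt (Rb^2) < sqrt Q) by (apply sqrt_lt_1_alt; split; [nra| lra]).
  rewrite sqrt_pow2 in H0 by lra. lra.
Qed.

Lemma first_chord phis Rb x y a D k :
  D = dOO phis Rb -> 0 < D -> 0 < Rb -> Rb^2 + D^2 - 1 = 2*D*Rb*k -> cos a = k ->
  0 < a -> a < PI/6 -> Rb <= 2*D*cos a ->
  Fstep phis Rb x y -> sd x = Sr -> sd y = SR ->
  cos a < cos (phi y + 2*theta y) -> cos a < cos (phi y + 4*theta y) ->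
  edist (base phis Rb x) (base phis Rb y) < 2/3*(rr*sin (theta x)) + 2/3*(Rb*sin (theta y)).
Proof.
  intros HD HDp HR HK Hk Ha Ha6 H2D Hf Hsx Hsy H2 H4.
  destruct Hf as (Hth0 & Hth1 & Hcl & Hop & (t & Ht & Hb) & Hd).
  destruct x as [sx f0 t0], y as [sy f1 t1]; simpl in *; subst sx sy.
  unfold base, center, radius, dir, reflect_at, on_arc_closed, on_arc_open, edist, other in *; simpl in *.
  unfold rr in *.
  rewrite <- HD in *.
  injection Hb as Hb1 Hb2. injection Hd as Hd1 Hd2.
  assert (HX : cos (f1 - 2*t1) = cos f1*(cos t1^2 - sin t1^2) + sin f1*(2*sin t1*cos t1))
    by (rewrite cos_minus, cos_2a, sin_2a; ring).
  assert (HV : sin (t1 - f1) = sin t1 * cos f1 - cos t1 * sin f1) by (rewrite sin_minus; ring).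
  assert (HC := core a f1 t1 D Rb Ha Ha6 Hth1).
  rewrite HX, HV in HC.
  assert (U0 := unit_cs f0). assert (U1 := unit_cs f1).
  assert (V0 := unit_cs t0). assert (V1 := unit_cs t1).
  rewrite Hk in *.
  set (c0 := cos f0) in *. set (s0 := sin f0) in *. set (C0 := cos t0) in *. set (S0 := sin t0) in *.
  set (c1 := cos f1) in *. set (s1 := sin f1) in *. set (C1 := cos t1) in *. set (S1 := sin t1) in *.
  set (v1 := C0 * - s0 + S0 * - c0) in *. set (v2 := C0 * c0 + S0 * - s0) in *.
  set (dt := v1 * c1 + v2 * s1) in *.
  assert (Hdt : dt = S1).
  { assert (E' : -S1*(c1^2+s1^2) = dt - 2*dt*(c1^2+s1^2)).
    { replace (-S1*(c1^2+s1^2)) with (c1*(C1 * - s1 + S1 * - c1) + s1*(C1*c1 + S1 * - s1)) by ring.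
      rewrite Hd1, Hd2. unfold dt. ring. }
    rewrite U1 in E'. lra. }
  rewrite Hdt in Hd1, Hd2.
  assert (Hv1 : v1 = S1*c1 - C1*s1) by lra.
  assert (Hv2 : v2 = C1*c1 + S1*s1) by lra.
  assert (Hvv : v1^2 + v2^2 = 1).
  { rewrite Hv1, Hv2. replace ((S1 * c1 - C1 * s1) ^ 2 + (C1 * c1 + S1 * s1) ^ 2)
      with ((C1^2+S1^2)*(c1^2+s1^2)) by ring. rewrite U1, V1. ring. }
  assert (HS0 : S0 = -(v1*c0 + v2*s0)).
  { replace (v1*c0+v2*s0) with (-S0*(c0^2+s0^2)) by (unfold v1, v2; ring). rewrite U0. ring. }
  set (Px := -D + Rb*c1) in *. set (Py := Rb * s1) in *.
  assert (Ec0 : c0 = Px - t*v1) by lra.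
  assert (Es0 : s0 = Py - t*v2) by lra.
  set (b := v1*Px + v2*Py).
  assert (Hbv : b = -D*v1 + Rb*S1).
  { unfold b, Px, Py. rewrite <- Hdt. unfold dt. ring. }
  assert (HS0' : S0 = t - b).
  { rewrite HS0, Ec0, Es0. unfold b.
    replace (-(v1 * (Px - t * v1) + v2 * (Py - t * v2))) with (t*(v1^2+v2^2) - (v1*Px+v2*Py)) by ring.
    rewrite Hvv. ring. }
  assert (Hg0 : Px^2 + Py^2 - 1 = 2*D*Rb*(k - c1)).
  { unfold Px, Py. replace ((-D + Rb*c1)^2 + (Rb*s1)^2 - 1) with (Rb^2*(c1^2+s1^2) + D^2 - 1 - 2*D*Rb*c1) by ring.
    rewrite U1. lra. }
  assert (Hq : t^2 - 2*b*t + (Px^2+Py^2-1) = 0).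
  { replace (t^2 - 2*b*t + (Px^2+Py^2-1)) with ((Px - t*v1)^2 + (Py - t*v2)^2 - 1 + t^2*(1 - (v1^2+v2^2))) by (unfold b; ring).
    rewrite <- Ec0, <- Es0, Hvv, U0. ring. }
  assert (Hed : (0 + 1 * c0 - Px) * ((0 + 1 * c0 - Px) * 1) + (0 + 1 * s0 - (0 + Py)) * ((0 + 1 * s0 - (0 + Py)) * 1) = t^2).
  { rewrite Ec0, Es0. replace ((0 + 1 * (Px - t * v1) - Px) * ((0 + 1 * (Px - t * v1) - Px) * 1) +
      (0 + 1 * (Py - t * v2) - (0 + Py)) * ((0 + 1 * (Py - t * v2) - (0 + Py)) * 1)) with (t^2*(v1^2+v2^2)) by ring.
    rewrite Hvv. ring. }
  rewrite Hed, sqrt_pow2 by lra.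
  apply sqrt_lt1 in Hop.
  assert (Hc1 : k < c1).
  { assert (Px^2+Py^2 < 1).
    { replace (Px^2+Py^2) with ((Px - 0) * ((Px - 0) * 1) + (0 + Py - 0) * ((0 + Py - 0) * 1)) by ring. exact Hop. }
    assert (0 < D*Rb) by nra. nra. }
  apply sqrt_leR in Hcl; auto.
  assert (HtT : t <= 2*Rb*S1).
  { assert (Eq : (0 + 1 * c0 - - D) * ((0 + 1 * c0 - - D) * 1) + (0 + 1 * s0 - 0) * ((0 + 1 * s0 - 0) * 1)
       = Rb^2 - 2*t*Rb*S1 + t^2).
    { rewrite Ec0, Es0. rewrite <- Hdt. unfold dt, Px, Py.
      replace ((0 + 1 * (- D + Rb * c1 - t * v1) - - D) * ((0 + 1 * (- D + Rb * c1 - t * v1) - - D) * 1) +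
        (0 + 1 * (Rb * s1 - t * v2) - 0) * ((0 + 1 * (Rb * s1 - t * v2) - 0) * 1))
      with (Rb^2*(c1^2+s1^2) - 2*t*Rb*(v1*c1+v2*s1) + t^2*(v1^2+v2^2)) by ring.
      rewrite U1, Hvv. ring. }
    rewrite Eq in Hcl. nra. }
  set (g0 := Px^2+Py^2-1) in *.
  set (T := 2*Rb*S1).
  assert (Hg0n : g0 < 0) by (rewrite Hg0; assert (0 < D*Rb) by nra; nra).
  assert (HgT : 0 <= T^2 - 2*b*T + g0).
  { assert (Id : t*(T^2 - 2*b*T + g0) = (T - t)*(t*T - g0)).
    { assert (E : t*(T^2 - 2*b*T + g0) - (T - t)*(t*T - g0) = T*(t^2 - 2*b*t + g0)) by ring.
      rewrite Hq in E. lra. }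
    assert (0 <= (T - t)*(t*T - g0)) by (apply Rmult_le_pos; unfold T in *; nra).
    destruct (Rle_or_lt 0 (T^2 - 2*b*T + g0)) as [h|h]; auto.
    assert (t*(T^2 - 2*b*T + g0) < 0) by (apply Rmult_pos_neg; lra). lra. }
  assert (HX' : c1 * (C1 ^ 2 - S1 ^ 2) + s1 * (2 * S1 * C1) <= k).
  { assert (E : c1 * (C1 ^ 2 - S1 ^ 2) + s1 * (2 * S1 * C1) = c1 - 2*S1*v1).
    { rewrite Hv1. replace (c1 * (C1 ^ 2 - S1 ^ 2) + s1 * (2 * S1 * C1)) with (c1*(C1^2+S1^2) - 2*S1*(S1*c1 - C1*s1)) by ring.
      rewrite V1. ring. }
    assert (E2 : T^2 - 2*b*T + g0 = 2*D*Rb*(k - (c1 - 2*S1*v1))).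
    { unfold T. rewrite Hbv, Hg0. ring. }
    rewrite E. assert (0 < D*Rb) by nra. nra. }
  destruct (HC ltac:(lra) H2 H4 HX' HR H2D) as [Hvp Hlt].
  rewrite <- Hv1 in Hvp, Hlt.
  set (X := 2*D*v1).
  assert (HgX : 0 < X^2 - 2*b*X + g0).
  { assert (E : X^2 - 2*b*X + g0 = 8*D^2*v1^2 - 4*D*Rb*v1*S1 + 2*D*Rb*(k - c1)).
    { unfold X. rewrite Hbv, Hg0. ring. }
    assert (E2 : c1 * (C1 ^ 2 - S1 ^ 2) + s1 * (2 * S1 * C1) = c1 - 2*S1*v1).
    { rewrite Hv1. replace (c1 * (C1 ^ 2 - S1 ^ 2) + s1 * (2 * S1 * C1)) with (c1*(C1^2+S1^2) - 2*S1*(S1*c1 - C1*s1)) by ring.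
      rewrite V1. ring. }
    rewrite E2 in HX'.
    assert (0 < D*Rb) by nra.
    assert (k - c1 >= -2*S1*v1) by lra.
    assert (2*D*Rb*(k-c1) >= 2*D*Rb*(-2*S1*v1)) by nra.
    assert (0 < D*v1*(D*v1 - Rb*S1)) by (apply Rmult_lt_0_compat; nra).
    nra. }
  assert (HtX : t < X).
  { assert (Id : t*(X^2 - 2*b*X + g0) = (X - t)*(t*X - g0)).
    { assert (E : t*(X^2 - 2*b*X + g0) - (X - t)*(t*X - g0) = X*(t^2 - 2*b*t + g0)) by ring.
      rewrite Hq in E. lra. }
    assert (0 < t*X - g0) by (unfold X; nra).
    assert (0 < (X - t)*(t*X - g0)) by nra.
    destruct (Rlt_or_le t X) as [h|h]; auto.
    assert ((t - X)*(t*X - g0) >= 0) by (apply Rle_ge, Rmult_le_pos; lra). nra. }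
  rewrite HS0', Hbv. unfold X in HtX. lra.
Qed.

Lemma sqrt_ltR Q Rb : 0 < Rb -> sqrt Q < Rb -> Q < Rb^2.
Proof.
  intros HR H. destruct (Rlt_or_le Q (Rb^2)) as [h|h]; auto.
  apply sqrt_le_1_alt in h. rewrite sqrt_pow2 in h by lra. lra.
Qed.

Lemma last_chord phis Rb y z a D k :
  D = dOO phis Rb -> 0 < D -> 0 < Rb -> Rb^2 + D^2 - 1 = 2*D*Rb*k -> cos a = k ->
  0 < a -> a < PI/6 -> Rb <= 2*D*cos a ->
  Fstep phis Rb y z -> sd y = SR -> sd z = Sr ->
  cos a < cos (phi y) ->
  cos a < cos (phi y - 2*theta y) -> cos a < cos (phi y - 4*theta y) ->
  edist (base phis Rb y) (base phis Rb z) < 2/3*(Rb*sin (theta y)) + 2/3*(rr*sin (theta z)).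
Proof.
  intros HD HDp HR HK Hk Ha Ha6 H2D Hf Hsy Hsz H0 H2 H4.
  destruct Hf as (Hth1 & Hth2 & Hcl & Hop & (t & Ht & Hb) & Hd).
  destruct y as [sy f1 t1], z as [sz f2 t2]; simpl in *; subst sy sz.
  unfold base, center, radius, dir, reflect_at, on_arc_closed, on_arc_open, edist, other in *; simpl in *.
  unfold rr in *.
  rewrite <- HD in *.
  injection Hb as Hb1 Hb2. injection Hd as Hd1 Hd2.
  assert (HX : cos (f1 + 2*t1) = cos f1*(cos t1^2 - sin t1^2) - sin f1*(2*sin t1*cos t1))
    by (rewrite cos_plus, cos_2a, sin_2a; ring).
  assert (HV : sin (t1 - - f1) = sin t1 * cos f1 + cos t1 * sin f1) by (rewrite sin_minus, cos_neg, sin_neg; ring).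
  assert (HC := core a (-f1) t1 D Rb Ha Ha6 Hth1).
  rewrite cos_neg in HC.
  replace (- f1 + 2 * t1) with (-(f1 - 2*t1)) in HC by ring.
  replace (- f1 + 4 * t1) with (-(f1 - 4*t1)) in HC by ring.
  replace (- f1 - 2 * t1) with (-(f1 + 2*t1)) in HC by ring.
  rewrite !cos_neg, HX, HV in HC.
  assert (U2 := unit_cs f2). assert (U1 := unit_cs f1).
  assert (V2 := unit_cs t2). assert (V1 := unit_cs t1).
  rewrite Hk in *.
  set (c2 := cos f2) in *. set (s2 := sin f2) in *. set (C2 := cos t2) in *. set (S2 := sin t2) in *.
  set (c1 := cos f1) in *. set (s1 := sin f1) in *. set (C1 := cos t1) in *. set (S1 := sin t1) in *.
  set (u1 := C1 * - s1 + S1 * - c1) in *. set (u2 := C1 * c1 + S1 * - s1) in *.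
  set (dt := u1 * c2 + u2 * s2) in *.
  assert (Hdt : dt = S2).
  { assert (E' : -S2*(c2^2+s2^2) = dt - 2*dt*(c2^2+s2^2)).
    { replace (-S2*(c2^2+s2^2)) with (c2*(C2 * - s2 + S2 * - c2) + s2*(C2*c2 + S2 * - s2)) by ring.
      rewrite Hd1, Hd2. unfold dt. ring. }
    rewrite U2 in E'. lra. }
  assert (Huu : u1^2 + u2^2 = 1).
  { replace (u1^2+u2^2) with ((C1^2+S1^2)*(c1^2+s1^2)) by (unfold u1, u2; ring). rewrite U1, V1. ring. }
  assert (Hun : u1*c1 + u2*s1 = -S1).
  { replace (u1*c1+u2*s1) with (-S1*(c1^2+s1^2)) by (unfold u1, u2; ring). rewrite U1. ring. }
  set (Px := -D + Rb*c1) in *. set (Py := Rb * s1) in *.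
  assert (Ec2 : c2 = Px + t*u1) by lra.
  assert (Es2 : s2 = Py + t*u2) by lra.
  set (b := u1*Px + u2*Py).
  set (w := S1 * c1 + C1 * s1) in *.
  assert (Hw : u1 = - w) by (unfold u1, w; ring).
  assert (Hbv : b = D*w - Rb*S1).
  { unfold b, Px, Py. replace (u1 * (- D + Rb * c1) + u2 * (Rb * s1)) with (-D*u1 + Rb*(u1*c1+u2*s1)) by ring.
    rewrite Hun, Hw. ring. }
  assert (HS2 : S2 = b + t).
  { rewrite <- Hdt. unfold dt. rewrite Ec2, Es2. unfold b.
    replace (u1 * (Px + t * u1) + u2 * (Py + t * u2)) with ((u1*Px+u2*Py) + t*(u1^2+u2^2)) by ring.
    rewrite Huu. ring. }
  assert (Hg0 : Px^2 + Py^2 - 1 = 2*D*Rb*(k - c1)).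
  { unfold Px, Py. replace ((-D + Rb*c1)^2 + (Rb*s1)^2 - 1) with (Rb^2*(c1^2+s1^2) + D^2 - 1 - 2*D*Rb*c1) by ring.
    rewrite U1. lra. }
  assert (Hq : t^2 + 2*b*t + (Px^2+Py^2-1) = 0).
  { replace (t^2 + 2*b*t + (Px^2+Py^2-1)) with ((Px + t*u1)^2 + (Py + t*u2)^2 - 1 + t^2*(1 - (u1^2+u2^2))) by (unfold b; ring).
    rewrite <- Ec2, <- Es2, Huu, U2. ring. }
  assert (Hed : (Px - (0 + 1 * c2)) * ((Px - (0 + 1 * c2)) * 1) +
     (0 + Py - (0 + 1 * s2)) * ((0 + Py - (0 + 1 * s2)) * 1) = t^2).
  { rewrite Ec2, Es2. replace ((Px - (0 + 1 * (Px + t * u1))) * ((Px - (0 + 1 * (Px + t * u1))) * 1) +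
     (0 + Py - (0 + 1 * (Py + t * u2))) * ((0 + Py - (0 + 1 * (Py + t * u2))) * 1)) with (t^2*(u1^2+u2^2)) by ring.
    rewrite Huu. ring. }
  rewrite Hed, sqrt_pow2 by lra.
  assert (HtT : t < 2*Rb*S1).
  { apply sqrt_ltR in Hop; auto.
    assert (Eq : (0 + 1 * c2 - - D) * ((0 + 1 * c2 - - D) * 1) + (0 + 1 * s2 - 0) * ((0 + 1 * s2 - 0) * 1)
       = Rb^2 - 2*t*Rb*S1 + t^2).
    { rewrite Ec2, Es2. unfold Px, Py.
      replace ((0 + 1 * (- D + Rb * c1 + t * u1) - - D) * ((0 + 1 * (- D + Rb * c1 + t * u1) - - D) * 1) +
        (0 + 1 * (Rb * s1 + t * u2) - 0) * ((0 + 1 * (Rb * s1 + t * u2) - 0) * 1))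
      with (Rb^2*(c1^2+s1^2) + 2*t*Rb*(u1*c1+u2*s1) + t^2*(u1^2+u2^2)) by ring.
      rewrite U1, Huu, Hun. ring. }
    rewrite Eq in Hop. nra. }
  set (g0 := Px^2+Py^2-1) in *.
  set (T := 2*Rb*S1).
  assert (Hg0n : g0 < 0) by (rewrite Hg0; assert (0 < D*Rb) by nra; nra).
  assert (HgT : 0 <= T^2 + 2*b*T + g0).
  { assert (Id : t*(T^2 + 2*b*T + g0) = (T - t)*(t*T - g0)).
    { assert (E : t*(T^2 + 2*b*T + g0) - (T - t)*(t*T - g0) = T*(t^2 + 2*b*t + g0)) by ring.
      rewrite Hq in E. lra. }
    assert (0 <= (T - t)*(t*T - g0)) by (apply Rmult_le_pos; unfold T in *; nra).
    destruct (Rle_or_lt 0 (T^2 + 2*b*T + g0)) as [h|h]; auto.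
    assert (t*(T^2 + 2*b*T + g0) < 0) by (apply Rmult_pos_neg; lra). lra. }
  assert (E2 : c1 * (C1 ^ 2 - S1 ^ 2) - s1 * (2 * S1 * C1) = c1 - 2*S1*w).
  { unfold w. replace (c1 * (C1 ^ 2 - S1 ^ 2) - s1 * (2 * S1 * C1)) with (c1*(C1^2+S1^2) - 2*S1*(S1*c1 + C1*s1)) by ring.
    rewrite V1. ring. }
  assert (HX' : c1 * (C1 ^ 2 - S1 ^ 2) - s1 * (2 * S1 * C1) <= k).
  { assert (E : T^2 + 2*b*T + g0 = 2*D*Rb*(k - (c1 - 2*S1*w))).
    { unfold T. rewrite Hbv, Hg0. ring. }
    rewrite E2. assert (0 < D*Rb) by nra. nra. }
  destruct (HC H0 H2 H4 HX' HR H2D) as [Hvp Hlt].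
  set (X := 2*D*w).
  assert (HgX : 0 < X^2 + 2*b*X + g0).
  { assert (E : X^2 + 2*b*X + g0 = 8*D^2*w^2 - 4*D*Rb*w*S1 + 2*D*Rb*(k - c1)).
    { unfold X. rewrite Hbv, Hg0. ring. }
    rewrite E2 in HX'.
    assert (0 < D*Rb) by nra.
    assert (k - c1 >= -2*S1*w) by lra.
    assert (2*D*Rb*(k-c1) >= 2*D*Rb*(-2*S1*w)) by nra.
    assert (0 < D*w*(D*w - Rb*S1)) by (apply Rmult_lt_0_compat; nra).
    nra. }
  assert (HtX : t < X).
  { assert (Id : t*(X^2 + 2*b*X + g0) = (X - t)*(t*X - g0)).
    { assert (E : t*(X^2 + 2*b*X + g0) - (X - t)*(t*X - g0) = X*(t^2 + 2*b*t + g0)) by ring.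
      rewrite Hq in E. lra. }
    assert (0 < t*X - g0) by (unfold X; nra).
    assert (0 < (X - t)*(t*X - g0)) by nra.
    destruct (Rlt_or_le t X) as [h|h]; auto.
    assert ((t - X)*(t*X - g0) >= 0) by (apply Rle_ge, Rmult_le_pos; lra). nra. }
  rewrite HS2, Hbv. unfold X in HtX. lra.
Qed.

Lemma step_RR phis Rb x y :
  0 < Rb -> Fstep phis Rb x y -> sd x = SR -> sd y = SR ->
  cos (phi y) = cos (phi x + 2*theta x) /\ sin (phi y) = sin (phi x + 2*theta x) /\
  cos (theta y) = cos (theta x) /\ sin (theta y) = sin (theta x).
Proof.
  intros HR Hf Hsx Hsy.
  destruct Hf as (Hth1 & Hth2 & Hcl & Hop & (t & Ht & Hb) & Hd).
  destruct x as [sx f1 t1], y as [sy f2 t2]; simpl in *; subst sx sy.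
  unfold base, center, radius, dir, reflect_at, on_arc_closed, on_arc_open, edist, other in *; simpl in *.
  injection Hb as Hb1 Hb2. injection Hd as Hd1 Hd2.
  assert (HX : cos (f1 + 2*t1) = cos f1*(cos t1^2 - sin t1^2) - sin f1*(2*sin t1*cos t1))
    by (rewrite cos_plus, cos_2a, sin_2a; ring).
  assert (HY : sin (f1 + 2*t1) = sin f1*(cos t1^2 - sin t1^2) + cos f1*(2*sin t1*cos t1))
    by (rewrite sin_plus, cos_2a, sin_2a; ring).
  rewrite HX, HY.
  assert (U2 := unit_cs f2). assert (U1 := unit_cs f1).
  assert (V2 := unit_cs t2). assert (V1 := unit_cs t1).
  set (c2 := cos f2) in *. set (s2 := sin f2) in *. set (C2 := cos t2) in *. set (S2 := sin t2) in *.
  set (c1 := cos f1) in *. set (s1 := sin f1) in *. set (C1 := cos t1) in *. set (S1 := sin t1) in *.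
  set (u1 := C1 * - s1 + S1 * - c1) in *. set (u2 := C1 * c1 + S1 * - s1) in *.
  set (dt := u1 * c2 + u2 * s2) in *.
  assert (Huu : u1^2 + u2^2 = 1).
  { replace (u1^2+u2^2) with ((C1^2+S1^2)*(c1^2+s1^2)) by (unfold u1, u2; ring). rewrite U1, V1. ring. }
  assert (Hun : u1*c1 + u2*s1 = -S1).
  { replace (u1*c1+u2*s1) with (-S1*(c1^2+s1^2)) by (unfold u1, u2; ring). rewrite U1. lra. }
  assert (Ec : Rb*c2 = Rb*c1 + t*u1) by lra.
  assert (Es : Rb*s2 = Rb*s1 + t*u2) by lra.
  assert (Htv : t = 2*Rb*S1).
  { assert (E : (Rb*c1 + t*u1)^2 + (Rb*s1 + t*u2)^2 = Rb^2).
    { rewrite <- Ec, <- Es. replace ((Rb * c2) ^ 2 + (Rb * s2) ^ 2) with (Rb^2*(c2^2+s2^2)) by ring.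
      rewrite U2. ring. }
    replace ((Rb*c1 + t*u1)^2 + (Rb*s1 + t*u2)^2) with (Rb^2*(c1^2+s1^2) + 2*t*Rb*(u1*c1+u2*s1) + t^2*(u1^2+u2^2)) in E by ring.
    rewrite U1, Hun, Huu in E.
    assert (t*(t - 2*Rb*S1) = 0) by lra.
    apply Rmult_integral in H. lra. }
  rewrite Htv in Ec, Es.
  assert (Ec' : c2 = c1 + 2*S1*u1).
  { apply (Rmult_eq_reg_l Rb); [|lra]. rewrite Ec. ring. }
  assert (Es' : s2 = s1 + 2*S1*u2).
  { apply (Rmult_eq_reg_l Rb); [|lra]. rewrite Es. ring. }
  assert (Hdt : dt = S1).
  { unfold dt. rewrite Ec', Es'.
    replace (u1 * (c1 + 2 * S1 * u1) + u2 * (s1 + 2 * S1 * u2)) with ((u1*c1+u2*s1) + 2*S1*(u1^2+u2^2)) by ring.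
    rewrite Hun, Huu. ring. }
  assert (HS2 : S2 = dt).
  { assert (E' : -S2*(c2^2+s2^2) = dt - 2*dt*(c2^2+s2^2)).
    { replace (-S2*(c2^2+s2^2)) with (c2*(C2 * - s2 + S2 * - c2) + s2*(C2*c2 + S2 * - s2)) by ring.
      rewrite Hd1, Hd2. unfold dt. ring. }
    rewrite U2 in E'. lra. }
  assert (HC2 : C2 = C1).
  { assert (E' : C2*(c2^2+s2^2) = -u1*s2 + u2*c2).
    { replace (C2*(c2^2+s2^2)) with ((C2 * - s2 + S2 * - c2)*(-s2) + (C2*c2 + S2 * - s2)*c2) by ring.
      rewrite Hd1, Hd2. ring. }
    rewrite U2, Rmult_1_r in E'. rewrite E', Ec', Es'.
    replace (- u1 * (s1 + 2 * S1 * u2) + u2 * (c1 + 2 * S1 * u1)) with (- u1 * s1 + u2 * c1) by ring.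
    replace (- u1 * s1 + u2 * c1) with (C1*(c1^2+s1^2)) by (unfold u1, u2; ring). rewrite U1. lra. }
  split; [|split; [|split]].
  - rewrite Ec'. unfold u1.
    replace (c1 * (C1 ^ 2 - S1 ^ 2)) with (c1*(C1^2+S1^2) - 2*S1^2*c1) by ring.
    rewrite V1. ring.
  - rewrite Es'. unfold u2.
    replace (s1 * (C1 ^ 2 - S1 ^ 2)) with (s1*(C1^2+S1^2) - 2*S1^2*s1) by ring.
    rewrite V1. ring.
  - exact HC2.
  - lra.
Qed.

Lemma shift_eq (p p' t t' : R) : cos p' = cos p -> sin p' = sin p -> cos t' = cos t -> sin t' = sin t ->
  cos (p' + 2*t') = cos (p + 2*t) /\ sin (p' + 2*t') = sin (p + 2*t).
Proof.
  intros H1 H2 H3 H4. rewrite !cos_plus, !sin_plus, !cos_2a, !sin_2a, H1, H2, H3, H4. split; ring.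
Qed.

Lemma back_shift (p q t t' : R) : cos q = cos (p + 2*t) -> sin q = sin (p + 2*t) -> cos t' = cos t -> sin t' = sin t ->
  cos p = cos (q - 2*t') /\ sin p = sin (q - 2*t').
Proof.
  intros H1 H2 H3 H4.
  assert (E1 : cos (2*t') = cos (2*t)) by (rewrite !cos_2a, H3, H4; ring).
  assert (E2 : sin (2*t') = sin (2*t)) by (rewrite !sin_2a, H3, H4; ring).
  rewrite cos_minus, sin_minus, H1, H2, E1, E2, <- cos_minus, <- sin_minus.
  replace (p + 2*t - 2*t) with p by ring. split; reflexivity.
Qed.

Lemma in_arc phis Rb y a D k :
  D = dOO phis Rb -> 0 < D -> 0 < Rb -> Rb^2 + D^2 - 1 = 2*D*Rb*k -> cos a = k ->
  sd y = SR -> on_arc_open phis Rb y -> cos a < cos (phi y).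
Proof.
  intros HD HDp HR HK Hk Hs Hop.
  destruct y as [sy f1 t1]; simpl in *; subst sy.
  unfold base, center, radius, on_arc_open, edist, other, rr in *; simpl in *.
  rewrite <- HD in *. apply sqrt_lt1 in Hop.
  assert (U1 := unit_cs f1). rewrite Hk.
  assert ((-D + Rb*cos f1)^2 + (Rb * sin f1)^2 < 1) by (simpl; lra).
  replace ((-D + Rb*cos f1)^2 + (Rb * sin f1)^2) with (Rb^2*(cos f1^2 + sin f1^2) + D^2 - 2*D*Rb*cos f1) in H by ring.
  rewrite U1 in H. assert (0 < D*Rb) by nra. nra.
Qed.

Lemma constants phis Rb : 0 < phis < PI/2 -> 332/10*rr <= Rb ->
  exists a k, 0 < dOO phis Rb /\ Rb^2 + (dOO phis Rb)^2 - 1 = 2*(dOO phis Rb)*Rb*k /\ cos a = k /\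
   0 < a /\ a < PI/6 /\ Rb <= 2*(dOO phis Rb)*cos a.
Proof.
  intros Hp HR. unfold rr in HR.
  assert (HPI := PI_RGT_0).
  assert (Hs : 0 < sin phis) by (apply sin_gt_0; lra).
  assert (Hc : 0 < cos phis) by (apply cos_gt_0; lra).
  assert (U := unit_cs phis).
  set (s := sin phis) in *. set (c := cos phis) in *.
  assert (HW2 : 0 <= Rb ^ 2 - rr ^ 2 * s ^ 2) by (unfold rr; nra).
  set (W := sqrt (Rb ^ 2 - rr ^ 2 * s ^ 2)).
  assert (HWW : W^2 = Rb^2 - s^2).
  { unfold W. rewrite <- Rsqr_pow2, Rsqr_sqrt by auto. unfold rr. ring. }
  assert (HW0 : 0 <= W) by (apply sqrt_pos).
  assert (HWR : W <= Rb) by nra.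
  assert (HW1 : Rb - 1 <= W) by nra.
  assert (HD : dOO phis Rb = W - c) by (unfold dOO, W, s, c, rr; ring).
  rewrite HD.
  set (k := W / Rb).
  assert (Hk0 : 0 <= k <= 1).
  { assert (HkW0 : k * Rb = W) by (unfold k; field; lra). split; nra. }
  assert (HkW : k * Rb = W) by (unfold k; field; lra).
  exists (acos k), k.
  assert (Hca : cos (acos k) = k) by (apply cos_acos; lra).
  assert (Hab := acos_bound k).
  assert (Hk2 : 3 < 4 * k^2) by nra.
  split; [nra|]. split; [replace (2*(W-c)*Rb*k) with (2*(W-c)*(k*Rb)) by ring; rewrite HkW; nra|]. split; [auto|]. split.
  - destruct (Rle_lt_or_eq_dec _ _ (proj1 Hab)) as [h|h]; auto.
    rewrite <- h, cos_0 in Hca. nra.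
  - split.
    + destruct (Rlt_or_le (acos k) (PI/6)) as [h|h]; auto.
      assert (cos (acos k) <= cos (PI/6)) by (apply Core.cos_le_a; lra).
      rewrite cos_PI6, Hca in H.
      assert (Hs3 : sqrt 3 * sqrt 3 = 3) by (apply sqrt_sqrt; lra).
      nra.
    + rewrite Hca. assert (Rb*Rb <= 2*(W-c)*(k*Rb)) by (rewrite HkW; nra).
      nra.
Qed.

Theorem mainTheorem10 :
  forall (phis Rb : R),
    0 < phis < PI / 2 ->
    332 / 10 * rr <= Rb ->
    forall (xs : nat -> state) (n0 n1 : nat),
      (forall k : nat, (k < n0 + 1 + n1 + 1)%nat -> Fstep phis Rb (xs k) (xs (S k))) ->
      sd (xs 0%nat) = Sr ->
      in_Mr_out xs n0 ->
      (forall k : nat, (k < n0)%nat -> ~ in_Mr_out xs k) ->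
      in_MR_out xs (n0 + 1 + n1)%nat ->
      (forall m : nat, (m < n1)%nat -> ~ in_MR_out xs (n0 + 1 + m)%nat) ->
      (2 <= n1)%nat ->
      let d0 := rr * sin (theta (xs n0)) in
      let d1 := Rb * sin (theta (xs (n0 + 1)%nat)) in
      let d2 := rr * sin (theta (xs (n0 + 1 + n1 + 1)%nat)) in
      let tau0 := edist (base phis Rb (xs n0)) (base phis Rb (xs (n0 + 1)%nat)) in
      let tau1 := edist (base phis Rb (xs (n0 + 1 + n1)%nat))
                       (base phis Rb (xs (n0 + 1 + n1 + 1)%nat)) in
      tau0 < 2 / 3 * d0 + 2 / 3 * d1 /\ tau1 < 2 / 3 * d1 + 2 / 3 * d2.
Proof.
  intros phis Rb Hphi HRb xs n0 n1 HF H0 Hin0 Hnot0 HinL HnotL Hn1 d0 d1 d2 tau0 tau1.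
  unfold d0, d1, d2, tau0, tau1.
  assert (HR : 0 < Rb) by (unfold rr in HRb; lra).
  destruct (constants phis Rb Hphi HRb) as (a & k & HDp & HK & Hk & Ha & Ha6 & H2D).
  set (D := dOO phis Rb) in *.
  assert (HDD : D = dOO phis Rb) by reflexivity.
  assert (Hrun : forall j, (j <= n1)%nat ->
     sd (xs (n0+1+j)%nat) = SR /\ cos (theta (xs (n0+1+j)%nat)) = cos (theta (xs (n0+1)%nat))
     /\ sin (theta (xs (n0+1+j)%nat)) = sin (theta (xs (n0+1)%nat))).
  { induction j as [|j IH]; intros Hj.
    - replace (n0+1+0)%nat with (n0+1)%nat by lia. split; [|split; reflexivity].
      destruct Hin0 as [_ h]. replace (n0+1)%nat with (S n0) by lia. exact h.
    - destruct (IH ltac:(lia)) as (Hs & Hc & Hsn).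
      assert (Hs' : sd (xs (S (n0+1+j))) = SR).
      { destruct (sd (xs (S (n0+1+j)))) eqn:E; auto.
        exfalso. apply (HnotL j ltac:(lia)). split; auto. }
      assert (Hst := step_RR phis Rb _ _ HR (HF (n0+1+j)%nat ltac:(lia)) Hs Hs').
      replace (n0 + 1 + S j)%nat with (S (n0+1+j)) by lia.
      destruct Hst as (_ & _ & E3 & E4). split; [exact Hs'|]. split; congruence. }
  assert (Hopen : forall i, (i < n0 + 1 + n1 + 1)%nat -> on_arc_open phis Rb (xs (S i))).
  { intros i Hi. destruct (HF i Hi) as (_ & _ & _ & h & _). exact h. }
  assert (Harc : forall i, (n0+1 <= i <= n0+1+n1)%nat -> cos a < cos (phi (xs i))).
  { intros i Hi. destruct (Hrun (i - (n0+1))%nat ltac:(lia)) as (Hs & _).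
    replace (n0 + 1 + (i - (n0 + 1)))%nat with i in Hs by lia.
    apply (in_arc phis Rb (xs i) a D k); auto.
    replace i with (S (i-1)) by lia. apply Hopen. lia. }
  split.
  -
    destruct Hin0 as [Hs0 Hs1].
    destruct (Hrun 1%nat ltac:(lia)) as (S1 & _ & _).
    destruct (Hrun 2%nat ltac:(lia)) as (S2 & _ & _).
    replace (n0+1+1)%nat with (S (S n0)) in S1 by lia.
    replace (n0+1+2)%nat with (S (S (S n0))) in S2 by lia.
    replace (n0+1)%nat with (S n0) by lia.
    assert (St1 := step_RR phis Rb _ _ HR (HF (S n0) ltac:(lia)) Hs1 S1).
    assert (St2 := step_RR phis Rb _ _ HR (HF (S (S n0)) ltac:(lia)) S1 S2).
    destruct St1 as (A1 & A2 & A3 & A4). destruct St2 as (B1 & B2 & B3 & B4).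
    assert (Hc2 : cos a < cos (phi (xs (S n0)) + 2 * theta (xs (S n0)))).
    { rewrite <- A1. apply Harc. lia. }
    assert (Hc4 : cos a < cos (phi (xs (S n0)) + 4 * theta (xs (S n0)))).
    { destruct (shift_eq _ _ _ _ A1 A2 A3 A4) as [C1 _].
      replace (phi (xs (S n0)) + 4 * theta (xs (S n0))) with
        (phi (xs (S n0)) + 2 * theta (xs (S n0)) + 2 * theta (xs (S n0))) by ring.
      rewrite <- C1, <- B1. apply Harc. lia. }
    apply (first_chord phis Rb _ _ a D k HDD HDp HR HK Hk Ha Ha6 H2D (HF n0 ltac:(lia)) Hs0 Hs1 Hc2 Hc4).
  -
    destruct HinL as [HsL HsZ].
    destruct (Hrun n1 ltac:(lia)) as (_ & EcL & EsL).
    destruct (Hrun (n1-1)%nat ltac:(lia)) as (SL1 & _ & _).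
    destruct (Hrun (n1-2)%nat ltac:(lia)) as (SL2 & _ & _).
    set (L := (n0+1+n1)%nat) in *.
    replace (n0 + 1 + (n1 - 1))%nat with (L - 1)%nat in SL1 by lia.
    replace (n0 + 1 + (n1 - 2))%nat with (L - 2)%nat in SL2 by lia.
    assert (St1 := step_RR phis Rb _ _ HR (HF (L-1)%nat ltac:(lia)) SL1
                     ltac:(replace (S (L-1)) with L by lia; exact HsL)).
    assert (St2 := step_RR phis Rb _ _ HR (HF (L-2)%nat ltac:(lia)) SL2
                     ltac:(replace (S (L-2)) with (L-1)%nat by lia; exact SL1)).
    replace (S (L-1)) with L in St1 by lia.
    replace (S (L-2)) with (L-1)%nat in St2 by lia.
    destruct St1 as (A1 & A2 & A3 & A4). destruct St2 as (B1 & B2 & B3 & B4).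
    destruct (back_shift _ _ _ _ A1 A2 A3 A4) as [C1 C2].
    assert (Hc0 : cos a < cos (phi (xs L))) by (apply Harc; lia).
    assert (Hc2 : cos a < cos (phi (xs L) - 2 * theta (xs L))).
    { rewrite <- C1. apply Harc; lia. }
    assert (Hc4 : cos a < cos (phi (xs L) - 4 * theta (xs L))).
    { assert (B3' : cos (theta (xs L)) = cos (theta (xs (L-2)%nat))) by congruence.
      assert (B4' : sin (theta (xs L)) = sin (theta (xs (L-2)%nat))) by congruence.
      destruct (back_shift _ _ _ _ B1 B2 B3' B4') as [D1 _].
      assert (E : cos (phi (xs (L - 1)%nat) - 2 * theta (xs L)) = cos (phi (xs L) - 4 * theta (xs L))).
      { rewrite cos_minus, C1, C2, <- cos_minus. f_equal. ring. }
      rewrite <- E, <- D1. apply Harc; lia. }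
    replace (L + 1)%nat with (S L) by lia.
    rewrite <- EsL.
    apply (last_chord phis Rb _ _ a D k HDD HDp HR HK Hk Ha Ha6 H2D (HF L ltac:(lia)) HsL); auto.
Qed.
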